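(* Let $\vec G$ be an oriented graph whose underlying graph $G$ has maximum average degree $\mathrm{mad}(G)<8/3$. Then the push graph $[\vec G]$ admits a homomorphism to the oriented graph $\vec P_3^+$; that is, some presentation of $[\vec G]$ admits a homomorphism to $\vec P_3^+$.
   Context: The maximum average degree of an undirected graph $G$ is $\mathrm{mad}(G)=\max\{2|E(H)|/|V(H)| : H \text{ a subgraph of } G \text{ with } V(H)\neq\emptyset\}$. $\vec P_3^+$ is the oriented graph on vertices $\{a,b,c,d\}$ with arcs $ac,\ cb,\ ba$ (a directed $3$-cycle) and $da,\ db,\ dc$. An oriented graph is a directed graph with no loops and no pair of opposite arcs. A homomorphism of oriented graphs $\vec G\to\vec H$ is a vertex map sending every arc $uv$ to an arc $\varphi(u)\varphi(v)$. To push a vertex means to reverse all arcs incident with it; the push graph $[\vec G]$ is the set of oriented graphs obtainable from $\vec G$ by pushing some set of vertices (its presentations). *)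

(* Defs.v *)
From mathcomp Require Import all_boot.
Set Implicit Arguments. Unset Strict Implicit. Unset Printing Implicit Defensive.

Definition oriented (T : finType) (arc : rel T) : Prop :=
  irreflexive arc /\ forall x y, arc x y -> ~~ arc y x.

Definition und_edges (T : finType) (arc : rel T) : {set {set T}} :=
  [set [set x; y] | x in T, y in T & arc x y].

(* mad(G) < p/q : every subgraph H = (S, F) with S nonempty, F a set of
   edges of G with both ends in S, satisfies 2|F|/|S| < p/q. *)
Definition mad_lt (T : finType) (arc : rel T) (p q : nat) : Prop :=
  forall (S : {set T}) (F : {set {set T}}),
    S != set0 -> F \subset und_edges arc ->
    (forall e, e \in F -> e \subset S) ->
    q * (2 * #|F|) < p * #|S|.

(* Pushing the vertex set X: reverse every arc with exactly one end in X
   (an arc with both ends in X is reversed twice). *)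
Definition push (T : finType) (arc : rel T) (X : {set T}) : rel T :=
  fun x y => if (x \in X) (+) (y \in X) then arc y x else arc x y.

(* P3+ on 'I_4 with a = 0, b = 1, c = 2, d = 3:
   arcs ac, cb, ba, da, db, dc. *)
Definition P3plus_arc : rel 'I_4 :=
  fun u v => (val u, val v) \in [:: (0,2); (2,1); (1,0); (3,0); (3,1); (3,2)].

Definition is_hom (T U : finType) (arcT : rel T) (arcU : rel U) (f : T -> U) :=
  forall x y, arcT x y -> arcU (f x) (f y).

(* Main.v *)
Require Import Defs.
From mathcomp Require Import all_boot.

Definition D := ('I_4 * bool)%type.
Definition P3f (i j : nat) : bool :=
  match i, j with 0,2|2,1|1,0|3,0|3,1|3,2 => true | _,_ => false end.
Definition darc (p q : D) : bool :=
  if p.2 == q.2 then P3f p.1 q.1 else P3f q.1 p.1.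
Definition ok (p : D) (a1 a2 : bool) (z : D) := (a1 ==> darc p z) && (a2 ==> darc z p).
Definition o0 : 'I_4 := @Ordinal 4 0 erefl.
Definition o1 : 'I_4 := @Ordinal 4 1 erefl.
Definition o2 : 'I_4 := @Ordinal 4 2 erefl.
Definition o3 : 'I_4 := @Ordinal 4 3 erefl.
Definition Denum : seq D := [seq (i, b) | i <- [:: o0; o1; o2; o3], b <- [:: true; false]].
Definition B := [:: true; false].

Lemma P3fE (i j : 'I_4) : P3plus_arc i j = P3f i j.
Proof. by case: i => [[|[|[|[|i]]]] Hi] //; case: j => [[|[|[|[|j]]]] Hj]. Qed.

Lemma Denum_all (p : D) : p \in Denum.
Proof. by case: p => [[[|[|[|[|i]]]] Hi] []]. Qed.
Lemma B_all (b : bool) : b \in B. Proof. by case: b. Qed.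

Definition good q b1 b2 c1 c2 z := has (fun zx => ok q b1 b2 zx && ok z c1 c2 zx) Denum.

Definition L1c := all (fun p => all (fun a1 => all (fun a2 =>
  ~~(a1 && a2) ==> has (ok p a1 a2) Denum) B) B) Denum.
Lemma L1b : L1c. Proof. vm_compute. reflexivity. Qed.

Definition L3c := all (fun p => all (fun a1 => all (fun a2 =>
  ~~(a1 && a2) ==> has (fun z1 => has (fun z2 => has (fun z3 =>
   [&& z1 != z2, z1 != z3, z2 != z3, ok p a1 a2 z1, ok p a1 a2 z2 & ok p a1 a2 z3])
   Denum) Denum) Denum) B) B) Denum.
Lemma L3b : L3c. Proof. vm_compute. reflexivity. Qed.

Definition Luc := all (fun q => all (fun b1 => all (fun b2 => all (fun c1 => all (fun c2 =>
  (~~(b1 && b2) && ~~(c1 && c2)) ==> all (fun z => all (fun z' =>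
   ~~ good q b1 b2 c1 c2 z ==> ~~ good q b1 b2 c1 c2 z' ==> (z == z')) Denum) Denum) B) B) B) B) Denum.
Lemma Lub : Luc. Proof. vm_compute. reflexivity. Qed.

Lemma L1 p a1 a2 : ~~(a1 && a2) -> exists z, ok p a1 a2 z.
Proof.
move=> H; have := L1b; move/allP/(_ p (Denum_all p))/allP/(_ a1 (B_all _))/allP/(_ a2 (B_all _)).
by rewrite H => /hasP[z _ Hz]; exists z.
Qed.

Lemma L3 p a1 a2 : ~~(a1 && a2) -> exists z1 z2 z3,
   [&& z1 != z2, z1 != z3, z2 != z3, ok p a1 a2 z1, ok p a1 a2 z2 & ok p a1 a2 z3].
Proof.
move=> H; have := L3b; move/allP/(_ p (Denum_all p))/allP/(_ a1 (B_all _))/allP/(_ a2 (B_all _)).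
rewrite H => /hasP[z1 _] /hasP[z2 _] /hasP[z3 _ Hz]; by exists z1, z2, z3.
Qed.

Lemma Lu q b1 b2 c1 c2 : ~~(b1 && b2) -> ~~(c1 && c2) ->
  forall z z', ~~ good q b1 b2 c1 c2 z -> ~~ good q b1 b2 c1 c2 z' -> z = z'.
Proof.
move=> Hb Hc z z' H1 H2; have := Lub.
move/allP/(_ q (Denum_all _))/allP/(_ b1 (B_all _))/allP/(_ b2 (B_all _)).
move/allP/(_ c1 (B_all _))/allP/(_ c2 (B_all _)); rewrite Hb Hc andbT implyTb.
move/allP/(_ z (Denum_all _))/allP/(_ z' (Denum_all _)).
by rewrite H1 H2 => /eqP.
Qed.

Lemma pig (T : eqType) (G1 G2 : pred T) (z1 z2 z3 : T) :
  z1 != z2 -> z1 != z3 -> z2 != z3 ->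
  (forall a b, ~~ G1 a -> ~~ G1 b -> a = b) ->
  (forall a b, ~~ G2 a -> ~~ G2 b -> a = b) ->
  exists z, [|| z == z1, z == z2 | z == z3] && G1 z && G2 z.
Proof.
move=> n12 n13 n23 U1 U2.
have [h1|h1] := boolP (G1 z1 && G2 z1); first by exists z1; rewrite eqxx.
have [h2|h2] := boolP (G1 z2 && G2 z2); first by exists z2; rewrite eqxx orbT.
have [h3|h3] := boolP (G1 z3 && G2 z3); first by exists z3; rewrite eqxx !orbT.
exfalso; move: h1 h2 h3; rewrite !negb_and.
move=> /orP[a1|a1] /orP[a2|a2] /orP[a3|a3];
 first [ by move: n12; rewrite (U1 _ _ a1 a2) eqxx
       | by move: n12; rewrite (U2 _ _ a1 a2) eqxx
       | by move: n13; rewrite (U1 _ _ a1 a3) eqxx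
       | by move: n13; rewrite (U2 _ _ a1 a3) eqxx
       | by move: n23; rewrite (U1 _ _ a2 a3) eqxx
       | by move: n23; rewrite (U2 _ _ a2 a3) eqxx ].
Qed.

Lemma Lb_ex p q a1 a2 b1 b2 c1 c2 : ~~(a1 && a2) -> ~~(b1 && b2) -> ~~(c1 && c2) ->
  exists z1, ok p a1 a2 z1 && good q b1 b2 c1 c2 z1.
Proof.
move=> Ha Hb Hc; have [z1 [z2 [z3 /and5P[n12 n13 n23 o1' /andP[o2' o3']]]]] := L3 p a1 a2 Ha.
have [z /andP[/andP[Hz G1] _]] := @pig _ _ _ _ _ _ n12 n13 n23 (Lu q b1 b2 c1 c2 Hb Hc) (Lu q b1 b2 c1 c2 Hb Hc).
exists z; rewrite G1 andbT.
by case/or3P: Hz => /eqP->.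
Qed.

Lemma Lc_ex p q1 q2 a1 a2 b1 b2 c1 c2 d1 d2 e1 e2 :
  ~~(a1 && a2) -> ~~(b1 && b2) -> ~~(c1 && c2) -> ~~(d1 && d2) -> ~~(e1 && e2) ->
  exists z, [&& ok p a1 a2 z, good q1 b1 b2 c1 c2 z & good q2 d1 d2 e1 e2 z].
Proof.
move=> Ha Hb Hc Hd He; have [z1 [z2 [z3 /and5P[n12 n13 n23 o1' /andP[o2' o3']]]]] := L3 p a1 a2 Ha.
have [z /andP[/andP[Hz G1] G2]] := @pig _ _ _ _ _ _ n12 n13 n23 (Lu q1 b1 b2 c1 c2 Hb Hc) (Lu q2 d1 d2 e1 e2 Hd He).
exists z; rewrite G1 G2 !andbT.
by case/or3P: Hz => /eqP->.
Qed.

From mathcomp Require Import zify.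
Set Implicit Arguments. Unset Strict Implicit. Unset Printing Implicit Defensive.

Definition adj (T : finType) (arc : rel T) x y := arc x y || arc y x.
Definition Nb (T : finType) (arc : rel T) (S : {set T}) v := [set u in S | adj arc v u].
Definition deg (T : finType) (arc : rel T) (S : {set T}) v := #|Nb arc S v|.
Definition T2 (T : finType) (arc : rel T) (S : {set T}) v :=
  [set u in S | adj arc v u && (deg arc S u == 2)].
Definition valid (T : finType) (arc : rel T) (S : {set T}) (g : T -> D) :=
  forall a b, a \in S -> b \in S -> arc a b -> darc (g a) (g b).
Definition upd (T : finType) (g : T -> D) v z := fun u => if u == v then z else g u.

Lemma adjC (T : finType) (arc : rel T) x y : adj arc x y = adj arc y x.
Proof. by rewrite /adj orbC. Qed.

Lemma valid_sub (T : finType) (arc : rel T) (A B : {set T}) g :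
  A \subset B -> valid arc B g -> valid arc A g.
Proof. by move=> /subsetP H V a b Ha Hb; apply: V; apply: H. Qed.

Lemma valid_upd (T : finType) (arc : rel T) (A : {set T}) g v z :
  irreflexive arc -> valid arc A g ->
  (forall u, u \in A -> u != v -> ok (g u) (arc u v) (arc v u) z) ->
  valid arc (v |: A) (upd g v z).
Proof.
move=> Hirr V H a b; rewrite !inE /upd.
have [->|nav] := eqVneq a v; have [->|nbv] := eqVneq b v => //=.
- by rewrite Hirr.
- by move=> _ Hb Hab; have /andP[_ ] := H b Hb nbv; rewrite Hab.
- by move=> Ha _ Hab; have /andP[+ _] := H a Ha nav; rewrite Hab.
- by move=> Ha Hb; apply: V.
Qed.

Lemma ok_nadj (T : finType) (arc : rel T) p u v z :
  ~~ adj arc v u -> ok p (arc u v) (arc v u) z.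
Proof. by rewrite /adj negb_or => /andP[/negbTE-> /negbTE->]. Qed.

Lemma cardsum (T : finType) (S : {set T}) (P : pred T) :
  #|[set u in S | P u]| = \sum_(u in S) P u.
Proof.
rewrite -sum1_card.
rewrite (eq_bigl (fun u => (u \in S) && P u)); last by move=> u; rewrite inE.
by rewrite big_mkcondr; apply: eq_bigr => u _; case: (P u).
Qed.

Lemma rest1 (T : finType) (A : {set T}) a : a \in A -> #|A| = 2 ->
  exists b, [/\ b != a, b \in A & forall u, u \in A -> u != a -> u = b].
Proof.
move=> Ha; rewrite (cardsD1 a A) Ha => -[] /eqP /cards1P [b Hb].
have : b \in A :\ a by rewrite Hb set11.
rewrite !inE => /andP[ba bA]; exists b; split.
- exact: ba.
- exact: bA.
- move=> u uA ua.
  have : u \in A :\ a by rewrite !inE ua uA.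
  by rewrite Hb inE => /eqP.
Qed.

Lemma rest2 (T : finType) (A : {set T}) a b : a \in A -> b \in A -> a != b -> #|A| = 3 ->
  exists w, forall u, u \in A -> u != a -> u != b -> u = w.
Proof.
move=> Ha Hb ab; rewrite (cardsD1 a A) Ha => -[].
have Hb' : b \in A :\ a by rewrite !inE eq_sym ab Hb.
rewrite (cardsD1 b (A :\ a)) Hb' => -[] /eqP /cards1P [w Hw].
exists w => u uA ua ub.
have : u \in A :\ a :\ b by rewrite !inE ua ub uA.
by rewrite Hw inE => /eqP.
Qed.

Lemma le1 (T : finType) (A : {set T}) (w0 : T) : #|A| <= 1 ->
  exists w, forall u, u \in A -> u = w.
Proof.
move=> H; case: (set_0Vmem A) => [->|[w Hw]].
  by exists w0 => u; rewrite inE.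
move/card_le1_eqP: H => H; exists w => u Hu; exact: H.
Qed.

Lemma adj_not_both (T : finType) (arc : rel T) :
  (forall x y, arc x y -> ~~ arc y x) -> forall x y, ~~ (arc x y && arc y x).
Proof. by move=> Ha x y; apply/andP => -[h1 h2]; move: (Ha _ _ h1); rewrite h2. Qed.

Lemma deg_sum (T : finType) (arc : rel T) (Hanti : forall x y, arc x y -> ~~ arc y x)
  (S : {set T}) v : deg arc S v = \sum_(u in S) (arc v u + arc u v).
Proof.
rewrite /deg /Nb cardsum; apply: eq_bigr => u _; rewrite /adj.
by case H1: (arc v u); case H2: (arc u v) => //; move: (Hanti _ _ H1); rewrite H2.
Qed.

Lemma sum_deg (T : finType) (arc : rel T) (Hanti : forall x y, arc x y -> ~~ arc y x) (S : {set T}) :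
  \sum_(v in S) deg arc S v = 2 * \sum_(v in S) \sum_(u in S) arc v u.
Proof.
rewrite (eq_bigr _ (fun v _ => deg_sum Hanti S v)).
rewrite (eq_bigr _ (fun v _ => big_split _ _ _ _ _)) big_split /=.
by rewrite [X in _ + X]exchange_big /= addnn mul2n.
Qed.

Lemma card_arcs (T : finType) (arc : rel T) (S : {set T}) :
  #|[set p in setX S S | arc p.1 p.2]| = \sum_(v in S) \sum_(u in S) arc v u.
Proof.
rewrite cardsum pair_big /=; apply: eq_bigl => -[a b]; by rewrite !inE.
Qed.

Lemma discharge (T : finType) (arc : rel T) (Hirr : irreflexive arc)
  (Hanti : forall x y, arc x y -> ~~ arc y x) (Hmad : mad_lt arc 8 3) (S : {set T}) :
  S != set0 ->
  (forall v, v \in S -> 1 < deg arc S v) ->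
  (forall x y, x \in S -> y \in S -> adj arc x y -> deg arc S x = 2 -> deg arc S y != 2) ->
  (forall v, v \in S -> deg arc S v = 3 -> #|T2 arc S v| <= 1) -> False.
Proof.
move=> S0 Hmin H22 H3.
set A := [set p in setX S S | arc p.1 p.2].
set F := [set [set p.1; p.2] | p in A].
have Hinj : {in A &, injective (fun p : T * T => [set p.1; p.2])}.
  move=> [a b] [c d]; rewrite !inE /= => /andP[_ ab] /andP[_ cd] E.
  have : a \in [set c; d] by rewrite -E set21.
  have : b \in [set c; d] by rewrite -E set22.
  rewrite !inE => /orP[/eqP eb|/eqP eb] /orP[/eqP ea|/eqP ea].
  - by move: ab; rewrite ea eb Hirr.
  - by move: (Hanti _ _ cd); rewrite -ea -eb ab.
  - by rewrite ea eb.
  - by move: ab; rewrite ea eb Hirr.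
have HF : #|F| = \sum_(v in S) \sum_(u in S) arc v u by rewrite card_in_imset // card_arcs.
have HFS : F \subset und_edges arc.
  apply/subsetP => e /imsetP [[a b]]; rewrite !inE /= => /andP[_ ab] ->.
  by apply/imset2P; exists a b; rewrite ?inE.
have HS : forall e, e \in F -> e \subset S.
  move=> e /imsetP[[a b]]; rewrite !inE /= => /andP[/andP[aS bS] _] ->.
  by apply/subsetP => u; rewrite !inE => /orP[/eqP->|/eqP->].
have := Hmad S F S0 HFS HS.
rewrite HF -(sum_deg Hanti) ltnNge => /negP; apply.
have key : \sum_(v in S) (8 + (2 < deg arc S v) * #|T2 arc S v|)
        <= \sum_(v in S) (3 * deg arc S v + 2 * (deg arc S v == 2)).
  apply: leq_sum => v vS; have h1 := Hmin v vS.
  have Ht : #|T2 arc S v| <= deg arc S v.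
    apply: subset_leq_card; apply/subsetP => u; rewrite !inE => /andP[-> /andP[-> _]] //.
  have [E2|N2] := eqVneq (deg arc S v) 2; first by rewrite E2.
  have [E3|N3] := eqVneq (deg arc S v) 3.
    by rewrite E3 /=; have := H3 v vS E3; lia.
  have -> : 2 < deg arc S v by lia.
  rewrite /= mul1n muln0 addn0; lia.
have dc : \sum_(v in S) (2 < deg arc S v) * #|T2 arc S v| = \sum_(v in S) 2 * (deg arc S v == 2).
  rewrite (eq_bigr (fun v => \sum_(u in S) (2 < deg arc S v) * (adj arc v u && (deg arc S u == 2))));
    last by move=> v _; rewrite /T2 cardsum big_distrr.
  rewrite exchange_big; apply: eq_bigr => u uS.
  have [E|N] := eqVneq (deg arc S u) 2.
  - transitivity (deg arc S u); last by rewrite E.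
    rewrite /deg /Nb cardsum; apply: eq_bigr => v vS.
    rewrite andbT adjC; case Ha: (adj arc u v); last by rewrite muln0.
    have := Hmin v vS; have := H22 u v uS vS Ha E => h h'.
    have -> : 2 < deg arc S v by lia.
    by [].
  - by rewrite big1 // => v _; rewrite andbF muln0.
have e1 : \sum_(v in S) (8 + (2 < deg arc S v) * #|T2 arc S v|) =
    #|S| * 8 + \sum_(v in S) (2 < deg arc S v) * #|T2 arc S v|.
  by rewrite big_split sum_nat_const.
have e2 : \sum_(v in S) (3 * deg arc S v + 2 * (deg arc S v == 2)) =
    3 * \sum_(v in S) deg arc S v + \sum_(v in S) 2 * (deg arc S v == 2).
  by rewrite big_split -big_distrr.
move: key; rewrite e1 e2 dc; lia.
Qed.

Lemma main_ind (T : finType) (arc : rel T) (Hirr : irreflexive arc)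
  (Hanti : forall x y, arc x y -> ~~ arc y x) (Hmad : mad_lt arc 8 3) n :
  forall S : {set T}, #|S| <= n -> exists g, valid arc S g.
Proof.
have Hnd := adj_not_both Hanti.
elim: n => [|n IH] S HS.
  have -> : S = set0 by apply/eqP; rewrite -cards_eq0; lia.
  by exists (fun _ => (o0, true)) => a b; rewrite inE.
have [S0|SN] := eqVneq S set0.
  by exists (fun _ => (o0, true)) => a b; rewrite S0 inE.
have IHv : forall v, v \in S -> exists g, valid arc (S :\ v) g.
  move=> v vS; apply: IH; move: HS; rewrite (cardsD1 v S) vS; lia.
case Ha: [exists v in S, deg arc S v <= 1].
  move/existsP: Ha => [v /andP[vS Hd]].
  have [w Hw] := le1 v Hd.
  have [g Hg] := IHv v vS.
  have [z Hz] := L1 (g w) (arc w v) (arc v w) (Hnd w v).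
  exists (upd g v z); rewrite -(setD1K vS); apply: valid_upd => // u.
  rewrite !inE => /andP[uv uS] _.
  case Hadj: (adj arc v u); last by apply: ok_nadj; rewrite Hadj.
  by rewrite (Hw u) ?inE ?uS ?Hadj.
case Hb: [exists x in S, exists y in S, [&& adj arc x y, deg arc S x == 2 & deg arc S y == 2]].
  move/existsP: Hb => [x /andP[xS /existsP[y /andP[yS /and3P[Hxy /eqP Dx /eqP Dy]]]]].
  have yN : y \in Nb arc S x by rewrite inE yS Hxy.
  have xN : x \in Nb arc S y by rewrite inE xS adjC Hxy.
  have [u0 [u0y u0N Hu0]] := rest1 yN Dx.
  have [w [wx wN Hw]] := rest1 xN Dy.
  have xy : x != y by apply/eqP => E; move: Hxy; rewrite E /adj Hirr.
  have [g Hg] := IHv x xS.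
  have [z1 /andP[Hz1 G]] := Lb_ex (g w) (g u0) (arc w y) (arc y w) (arc u0 x) (arc x u0)
     (arc y x) (arc x y) (Hnd w y) (Hnd u0 x) (Hnd y x).
  have /hasP[z _ /andP[Hzu Hzy]] := G.
  exists (upd (upd g y z1) x z).
  rewrite -(setD1K xS); apply: valid_upd => //.
  - have yS' : y \in S :\ x by rewrite !inE eq_sym xy yS.
    rewrite -(setD1K yS'); apply: valid_upd => //.
      apply: valid_sub Hg; exact: subD1set.
    move=> u; rewrite !inE => /andP[uy /andP[ux uS]] _.
    case Hadj: (adj arc y u); last by apply: ok_nadj; rewrite Hadj.
    by rewrite (Hw u) ?inE ?uS ?Hadj.
  - move=> u; rewrite !inE => /andP[ux uS] _.
    case Hadj: (adj arc x u); last by apply: ok_nadj; rewrite Hadj.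
    rewrite /upd; have [->|uy] := eqVneq u y; rewrite ?eqxx //.
    by rewrite ?(negbTE uy) (Hu0 u) ?inE ?uS ?Hadj.
case Hc: [exists v in S, (deg arc S v == 3) && (1 < #|T2 arc S v|)].
  move/existsP: Hc => [v /andP[vS /andP[/eqP D3 /card_gt1P [x [y [xT yT xy]]]]]].
  move: xT yT; rewrite !inE => /and3P[xS vx /eqP Dx] /and3P[yS vy /eqP Dy].
  have xN : x \in Nb arc S v by rewrite inE xS vx.
  have yN : y \in Nb arc S v by rewrite inE yS vy.
  have vNx : v \in Nb arc S x by rewrite inE vS adjC vx.
  have vNy : v \in Nb arc S y by rewrite inE vS adjC vy.
  have [w Hw] := rest2 xN yN xy D3.
  have [x' [x'v x'N Hx']] := rest1 vNx Dx.
  have [y' [y'v y'N Hy']] := rest1 vNy Dy.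
  have no22 : ~~ adj arc x y.
    apply/negP => Hxy; move/negbT/negP: Hb; apply; apply/existsP; exists x; rewrite xS /=.
    by apply/existsP; exists y; rewrite yS Hxy Dx Dy.
  have x'y : x' != y.
    by apply/eqP => E; move: x'N; rewrite E inE => /andP[_ H]; rewrite H in no22.
  have y'x : y' != x.
    by apply/eqP => E; move: y'N; rewrite E inE adjC => /andP[_ H]; rewrite H in no22.
  have xv : x != v by apply/eqP => E; move: vx; rewrite E /adj Hirr.
  have yv : y != v by apply/eqP => E; move: vy; rewrite E /adj Hirr.
  have [g Hg] := IHv v vS.
  have [z /and3P[Hz G1 G2]] := Lc_ex (g w) (g x') (g y') (arc w v) (arc v w)
     (arc x' x) (arc x x') (arc v x) (arc x v) (arc y' y) (arc y y') (arc v y) (arc y v)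
     (Hnd w v) (Hnd x' x) (Hnd v x) (Hnd y' y) (Hnd v y).
  have /hasP[zx _ /andP[Hzx1 Hzx2]] := G1.
  have /hasP[zy _ /andP[Hzy1 Hzy2]] := G2.
  exists (upd (upd (upd g v z) x zx) y zy).
  rewrite -(setD1K yS); apply: valid_upd => //.
  - have xS' : x \in S :\ y by rewrite !inE xy xS.
    rewrite -(setD1K xS'); apply: valid_upd => //.
    + have vS' : v \in S :\ y :\ x by rewrite !inE eq_sym xv eq_sym yv vS.
      rewrite -(setD1K vS'); apply: valid_upd => //.
      * apply: valid_sub Hg; apply/subsetP => u; rewrite !inE.
        by case/andP => -> /andP[_ /andP[_ ->]].
      * move=> u; rewrite !inE => /andP[uv /andP[ux /andP[uy uS]]] _.
        case Hadj: (adj arc v u); last by apply: ok_nadj; rewrite Hadj.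
        by rewrite (Hw u) ?inE ?uS ?Hadj.
    + move=> u; rewrite !inE => /andP[ux /andP[uy uS]] _.
      case Hadj: (adj arc x u); last by apply: ok_nadj; rewrite Hadj.
      rewrite /upd; have [->|uv] := eqVneq u v; rewrite ?eqxx //.
      by rewrite ?(negbTE uv) (Hx' u) ?inE ?uS ?Hadj.
  - move=> u; rewrite !inE => /andP[uy uS] _.
    case Hadj: (adj arc y u); last by apply: ok_nadj; rewrite Hadj.
    rewrite /upd; have [->|uv] := eqVneq u v.
      by rewrite ?eqxx eq_sym (negbTE xv) ?eqxx.
    rewrite (Hy' u) ?inE ?uS ?Hadj //.
    by rewrite ?(negbTE y'x) ?(negbTE y'v).
exfalso; apply: (discharge Hirr Hanti Hmad SN).
- move=> v vS; move/negbT/existsPn: Ha => /(_ v); rewrite vS /= -ltnNge; done.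
- move=> x y xS yS Hxy Dx; apply/negP => /eqP Dy; move/negbT/negP: Hb; apply.
  apply/existsP; exists x; rewrite xS /=; apply/existsP; exists y.
  by rewrite yS Hxy Dx Dy.
- move=> v vS D3; rewrite leqNgt; apply/negP => H; move/negbT/negP: Hc; apply.
  by apply/existsP; exists v; rewrite vS D3 H.
Qed.

Theorem mainTheorem12 (T : finType) (arc : rel T) :
  oriented arc -> mad_lt arc 8 3 ->
  exists (X : {set T}) (f : T -> 'I_4), is_hom (push arc X) P3plus_arc f.
Proof.
move=> [Hirr Hanti] Hmad.
have [g Hg] := main_ind Hirr Hanti Hmad (leqnn #|[set: T]|).
exists [set v | (g v).2], (fun v => (g v).1) => x y.
move: (Hg x y (in_setT x) (in_setT y)) (Hg y x (in_setT y) (in_setT x)).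
rewrite /push !inE /darc !P3fE.
case: (g x) => i s; case: (g y) => j t /=.
by case: s; case: t => /= H1 H2; first [exact: H1 | exact: H2].
Qed.
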